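(* Assume the following: for every prime $p$, every $d\ge1$, and every transitive subgroup $G\subseteq W_{2d}$ containing complex conjugation $\iota=(1\,\bar1)(2\,\bar2)\cdots(d\,\bar d)$, there exist an integer $r\ge1$ and a simple (indeed ordinary) abelian variety $A$ over $\mathbb{F}_{p^r}$ of dimension $d$ such that $G$ is $w_A$-conjugate to the image of the weighted permutation representation of $A$. Then the inverse Galois problem holds for totally real fields: for every $d\ge1$ and every transitive subgroup $G\subseteq S_d$, $G$ is the Galois group of a polynomial $P^+(T)\in\mathbb{Q}[T]$ of degree $d$, and the splitting field of $P^+(T)$ may be taken to be totally real.
   Context: $W_{2d}$ is the group of permutations of $\{1,\bar1,\dots,d,\bar d\}$ preserving the partition into the pairs $\{k,\bar k\}$. For a simple abelian variety $A$ over $\mathbb{F}_{p^r}$ whose Frobenius minimal polynomial $h_A$ has degree $2d$ and no real roots, fix $\overline{\mathbb{Q}}\subset\mathbb{C}$ and $\overline{\mathbb{Q}}\hookrightarrow\overline{\mathbb{Q}}_p$, with $\nu$ the $p$-adic valuation normalized by $\nu(p^r)=1$; an indexing is a bijection $x\mapsto\alpha_x$ from $\{1,\bar1,\dots,d,\bar d\}$ to the roots with $\alpha_{\bar k}=\overline{\alpha_k}$ and $\nu(\alpha_i)\le\nu(\alpha_j)\le\nu(\alpha_{\bar j})\le\nu(\alpha_{\bar i})$ for $i\le j$; the weight is $w_A(x)=\nu(\alpha_x)$ and the weighted permutation representation is the resulting embedding of the Galois group of $h_A$ into $W_{2d}$. Subgroups are $w_A$-conjugate if conjugate by some $\sigma\in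 W_{2d}$ with $w_A\circ\sigma=w_A$. *)

(* Defs.v *)
From HB Require Import structures.
From mathcomp Require Import all_boot all_order all_algebra all_fingroup all_field.
Set Implicit Arguments. Unset Strict Implicit. Unset Printing Implicit Defensive.
Import Order.TTheory GRing.Theory Num.Theory.
Local Open Scope ring_scope.

(* Overline-Q is modelled by algC (algebraic numbers inside C, with complex
   conjugation Num.conj).  The set {1,1bar,...,d,dbar} is 'I_d * bool:
   (k,false) = k+1, (k,true) = bar(k+1). *)
Definition Idx (d : nat) : finType := ('I_d * bool)%type.

Definition W2d (d : nat) : {set {perm Idx d}} :=
  [set s : {perm Idx d} | [forall x : Idx d, s (x.1, ~~ x.2) == ((s x).1, ~~ (s x).2)]].

Lemma bar_inj d : injective (fun x : Idx d => (x.1, ~~ x.2)).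
Proof. by move=> [a b] [c e] /= [-> /negb_inj ->]. Qed.

Definition iota_perm (d : nat) : {perm Idx d} := perm (@bar_inj d).

(* Galois group of the roots alpha (listed by a finite type), as a
   permutation group: permutations induced by field automorphisms of Qbar
   (every ring endomorphism of algC is an automorphism; every automorphism of
   a splitting field extends to Qbar). *)
Definition galperm (T : finType) (alpha : T -> algC) (s : {perm T}) : Prop :=
  exists sigma : {rmorphism algC -> algC}, forall x, sigma (alpha x) = alpha (s x).

(* An extension to Qbar of the p-adic valuation normalized by v(p) = 1
   (coming from the fixed embedding Qbar -> Qbar_p); value at 0 irrelevant. *)
Definition is_padic_val (p : nat) (v : algC -> rat) : Prop :=
  [/\ forall x y : algC, x != 0 -> y != 0 -> v (x * y) = v x + v y,
      forall x y : algC, x != 0 -> y != 0 -> x + y != 0 ->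
        Num.min (v x) (v y) <= v (x + y)
    & v (p%:R) = 1].

(* The only facts assumed are the standard ones: h_A is monic irreducible in
   Q[T] and its complex roots are Weil p^r-numbers (Weil's theorem). *)
Record AbVarTheory := {
  av : nat -> nat -> Type;                         (* av p r : varieties over F_{p^r} *)
  av_dim : forall p r, av p r -> nat;
  av_simple : forall p r, av p r -> Prop;
  av_ordinary : forall p r, av p r -> Prop;
  av_frobmin : forall p r, av p r -> {poly rat};
  av_frobmin_monic : forall p r (A : av p r), av_frobmin A \is monic;
  av_frobmin_irr : forall p r (A : av p r), irreducible_poly (av_frobmin A);
  av_frob_weil : forall p r (A : av p r) (z : algC), prime p -> (0 < r)%N ->
      root (map_poly ratr (av_frobmin A)) z -> z * z^* = (p ^ r)%:R
}.

(* An indexing x |-> alpha_x of the roots of h (degree 2d, no real roots),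
   for the valuation nu normalized with nu(p^r) = 1, i.e. nu = v / r. *)
Definition weight (v : algC -> rat) (r : nat) (d : nat) (alpha : Idx d -> algC)
  (x : Idx d) : rat := v (alpha x) / r%:R.

Definition is_indexing (v : algC -> rat) (r d : nat) (h : {poly rat})
  (alpha : Idx d -> algC) : Prop :=
  [/\ injective alpha,
      (forall x, root (map_poly ratr h) (alpha x)),
      (forall z, root (map_poly ratr h) z -> exists x, z = alpha x),
      (forall k : 'I_d, alpha (k, true) = (alpha (k, false))^*)
    & forall i j : 'I_d, (i <= j)%N ->
        [/\ weight v r alpha (i, false) <= weight v r alpha (j, false),
            weight v r alpha (j, false) <= weight v r alpha (j, true)
          & weight v r alpha (j, true) <= weight v r alpha (i, true)]].

Definition wconj (d : nat) (w : Idx d -> rat) (G : {set {perm Idx d}})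
  (H : {perm Idx d} -> Prop) : Prop :=
  exists2 c : {perm Idx d}, c \in W2d d &
    (forall x, w (c x) = w x) /\ (forall s, s \in G <-> H (s ^ c)%g).

(* Main.v *)
Require Import Defs.
From HB Require Import structures.
From mathcomp Require Import all_boot all_order all_algebra all_fingroup all_field.
From mathcomp Require Import ring zify.
Set Implicit Arguments. Unset Strict Implicit. Unset Printing Implicit Defensive.
Import Order.TTheory GRing.Theory Num.Theory.
Local Open Scope ring_scope.

Section Grp.
Variable d : nat.

Lemma liftb_inj (g : {perm 'I_d}) (b : bool) :
  injective (fun x : Idx d => (g x.1, x.2 (+) b)).
Proof.
move=> [x1 x2] [y1 y2] /= [/perm_inj -> e]; congr pair.
by move: e; case: b; case: x2; case: y2.
Qed.

Definition liftb g b : {perm Idx d} := perm (@liftb_inj g b).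

Lemma liftbE g b x : liftb g b x = (g x.1, x.2 (+) b).
Proof. by rewrite permE. Qed.

Lemma liftbM g1 b1 g2 b2 :
  (liftb g1 b1 * liftb g2 b2)%g = liftb (g1 * g2)%g (b1 (+) b2).
Proof.
apply/permP => x; rewrite permM !liftbE /= permM; congr pair.
by rewrite addbA.
Qed.

Definition Gp (G : {group {perm 'I_d}}) : {set {perm Idx d}} :=
  [set liftb g b | g in G, b in [set: bool]].

Lemma Gp_group G : group_set (Gp G).
Proof.
apply/group_setP; split.
  apply/imset2P; exists (1%g : {perm 'I_d}) false; rewrite ?group1 ?inE //.
  by apply/permP => x; rewrite liftbE !perm1 addbF; case: x.
move=> x y /imset2P[g1 b1 Hg1 _ ->] /imset2P[g2 b2 Hg2 _ ->].
rewrite liftbM; apply/imset2P; exists (g1 * g2)%g (b1 (+) b2) => //.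
exact: groupM.
Qed.

Canonical Gp_grp G := Group (Gp_group G).

Lemma Gp_W G : Gp G \subset W2d d.
Proof.
apply/subsetP => t /imset2P[g b _ _ ->]; rewrite inE; apply/forallP => x.
by rewrite !liftbE /= addNb.
Qed.

Lemma iota_Gp G : iota_perm d \in Gp G.
Proof.
apply/imset2P; exists (1%g : {perm 'I_d}) true; rewrite ?group1 ?inE //.
by apply/permP => x; rewrite liftbE addbT !permE.
Qed.

Lemma Gp_trans (G : {group {perm 'I_d}}) : (0 < d)%N ->
  [transitive G, on [set: 'I_d] | 'P] ->
  [transitive (Gp_grp G), on [set: Idx d] | 'P].
Proof.
move=> d0 tG.
have k0 : 'I_d := Ordinal d0.
apply/imsetP; exists (k0, false) => //.
apply/setP => y; rewrite inE; symmetry; apply/orbitP.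
have [g Hg Hy] := atransP2 tG (in_setT k0) (in_setT y.1).
exists (liftb g y.2); first by apply/imset2P; exists g y.2.
move: Hy; rewrite /= /aperm liftbE /=; by case: y => y1 y2 /= ->.
Qed.

End Grp.

Definition zz (N : nat) (j : nat) : rat := (j + N + 1)%:R.
Definition yy (N : nat) (j : nat) : rat := zz N j + N%:R / zz N j.

Lemma zz_neq0 N j : zz N j != 0.
Proof. by rewrite /zz pnatr_eq0 addn1. Qed.

Lemma yy_inj N : injective (yy N).
Proof.
move=> i j E.
have u0 := zz_neq0 N i; have v0 := zz_neq0 N j.
have H : (zz N i - zz N j) * (zz N i * zz N j - N%:R) =
         zz N i * zz N j * (yy N i - yy N j).
  rewrite /yy; move: (zz N i) (zz N j) u0 v0 => u v u0 v0; field; by rewrite u0 v0.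
move: H; rewrite E subrr mulr0 => /eqP; rewrite mulf_eq0 => /orP[].
  by rewrite subr_eq0 /zz eqr_nat => /eqP; lia.
rewrite /zz -natrM -natrB; last by nia.
by rewrite pnatr_eq0; nia.
Qed.

Section Roots.
Variables (d N : nat) (h : {poly rat}) (a : Idx d -> algC).
Hypothesis Hinj : injective a.
Hypothesis Hroot : forall x, root (map_poly (@ratr algC) h) (a x).
Hypothesis Hall : forall z, root (map_poly (@ratr algC) h) z -> exists x, z = a x.
Hypothesis Hbar : forall x : Idx d, a (x.1, ~~ x.2) = (a x)^*.
Hypothesis Hq : forall x, a x * (a x)^* = N%:R.
Hypothesis Hmon : h \is monic.
Hypothesis Hsize : size h = (2 * d).+1.

Lemma sigma_perm (sigma : {rmorphism algC -> algC}) :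
  exists t : {perm Idx d}, forall x, sigma (a x) = a (t x).
Proof.
have Hr x : exists y, sigma (a x) = a y.
  apply: Hall; have := rmorph_root sigma (Hroot x).
  rewrite -map_poly_comp; congr root; apply: eq_map_poly => c /=.
  exact: fmorph_rat.
pose f x := odflt x [pick y | sigma (a x) == a y].
have fE x : sigma (a x) = a (f x).
  rewrite /f; case: pickP => [y /eqP //|H].
  by have [y Hy] := Hr x; move: (H y); rewrite Hy eqxx.
have finj : injective f.
  by move=> x y Hxy; apply: Hinj; apply: (fmorph_inj sigma); rewrite !fE Hxy.
by exists (perm finj) => x; rewrite permE fE.
Qed.

Definition beta (k : 'I_d) := a (k, false) + a (k, true).

Lemma beta_conj k : beta k = a (k, false) + (a (k, false))^*.
Proof. by rewrite /beta -(Hbar (k, false)). Qed.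

Lemma beta_real k : beta k \is Num.real.
Proof. rewrite beta_conj CrealE rmorphD /= (conjCK (a (k, false))) addrC; by apply/eqP. Qed.

Lemma beta_inj : injective beta.
Proof.
move=> k j E.
set w := a (j, false).
have H1 : w ^+ 2 - beta j * w + N%:R = 0.
  rewrite beta_conj -/w -(Hq (j, false)) -/w; ring.
have H2 : w ^+ 2 - beta k * w + N%:R = (w - a (k, false)) * (w - a (k, true)).
  rewrite /beta -(Hq (k, false)) -(Hbar (k, false)) /=; ring.
move: H1; rewrite -E H2 => /eqP; rewrite mulf_eq0 !subr_eq0 => /orP[] /eqP /Hinj.
  by case.
by case.
Qed.


Lemma hC_prod : map_poly (@ratr algC) h = \prod_(x : Idx d) ('X - (a x)%:P).
Proof.
pose rs := [seq a x | x <- enum (Idx d)].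
have Hs : size (map_poly (@ratr algC) h) = (size rs).+1.
  by rewrite size_map_poly Hsize size_map -cardE card_prod card_ord card_bool mulnC.
have Hr : all (root (map_poly (@ratr algC) h)) rs.
  by apply/allP => z /mapP[x _ ->].
have Hu : uniq_roots rs.
  by rewrite uniq_rootsE map_inj_uniq ?enum_uniq.
rewrite (all_roots_prod_XsubC Hs Hr Hu) lead_coef_map (monicP Hmon) rmorph1 scale1r.
by rewrite big_map big_enum.
Qed.

Definition Qp := \prod_(k < d) ('X - (beta k)%:P).

Lemma Q_eval z : z != 0 -> (map_poly (@ratr algC) h).[z] = z ^+ d * Qp.[z + N%:R / z].
Proof.
move=> z0; rewrite hC_prod horner_prod /Qp horner_prod.
have -> : \prod_(x : Idx d) ('X - (a x)%:P).[z] =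
    \prod_(i < d) \prod_(j : bool) ('X - (a (i, j))%:P).[z].
  by rewrite pair_bigA; apply: eq_bigr => -[i j].
rewrite -[in z ^+ d](card_ord d) -prodr_const -big_split /=; apply: eq_bigr => k _.
rewrite big_bool /= !hornerXsubC /beta.
have e : a (k, true) = (a (k, false))^* by rewrite -(Hbar (k, false)).
rewrite -(Hq (k, false)) -e; field; exact: z0.
Qed.


Lemma exP : exists P : {poly rat}, map_poly (@ratr algC) P = Qp.
Proof.
pose x := fun j => (@ratr algC) (yy N j).
have xinj : injective x by move=> i j /fmorph_inj /yy_inj.
have n0 : (0 < d.+1)%N by [].
pose v i := h.[zz N i] / zz N i ^+ d.
exists (\sum_(i < d.+1) (v i)%:P * tnth (lagrange d.+1 (yy N)) i).
have sQ : (size Qp <= d.+1)%N.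
  by rewrite /Qp size_prod_XsubC /index_enum /= -enumT -cardE card_ord.
rewrite [RHS](lagrange_gen n0 xinj sQ) rmorph_sum; apply: eq_bigr => i _.
rewrite rmorphM /= map_polyC; congr (_ * _).
  congr (_%:P).
  have z0 : (@ratr algC) (zz N i) != 0 by rewrite fmorph_eq0 zz_neq0.
  have := Q_eval z0; rewrite horner_map /= => E.
  transitivity ((@ratr algC) h.[zz N i] / (@ratr algC) (zz N i) ^+ d).
    by rewrite /v fmorph_div rmorphXn.
  rewrite E mulrC mulKf ?expf_neq0 //.
  rewrite /x /yy rmorphD fmorph_div; congr (Qp.[_ + _ / _]); exact: (esym (rmorph_nat _ N)).
rewrite !lagrangeE //; last exact: yy_inj.
have Hp : map_poly (@ratr algC) (\prod_(j < d.+1 | j != i) ('X - (yy N j)%:P)) =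
          \prod_(j < d.+1 | j != i) ('X - (x j)%:P).
  rewrite rmorph_prod; apply: eq_bigr => j _; exact: (map_polyXsubC (@ratr algC)).
rewrite /= rmorphM /= map_polyC fmorphV /= Hp -Hp horner_map /= Hp.
congr (_ * _); rewrite polyCV; congr (_%:P); exact: (fmorphV (@ratr algC)).
Qed.

End Roots.

Theorem proposition7p2 (AV : AbVarTheory) (nu : nat -> algC -> rat)
  (Hnu : forall p, prime p -> is_padic_val p (nu p))
  (Hconj : forall (p d : nat) (G : {group {perm Idx d}}),
     prime p -> (0 < d)%N -> G \subset W2d d ->
     [transitive G, on [set: Idx d] | 'P] -> iota_perm d \in G ->
     exists (r : nat) (A : av AV p r),
       [/\ [/\ (0 < r)%N, av_simple A, av_ordinary A & av_dim A = d],
           size (av_frobmin A) = (2 * d).+1,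
           (forall z : algC, root (map_poly ratr (av_frobmin A)) z -> z^* != z)
         & exists alpha : Idx d -> algC,
             is_indexing (nu p) r (av_frobmin A) alpha /\
             wconj (weight (nu p) r alpha) G (galperm alpha)]) :
  forall (d : nat) (G : {group {perm 'I_d}}),
    (0 < d)%N -> [transitive G, on [set: 'I_d] | 'P] ->
    exists (P : {poly rat}) (beta : 'I_d -> algC),
      [/\ injective beta,
          map_poly ratr P = \prod_(i < d) ('X - (beta i)%:P),
          (forall s : {perm 'I_d}, s \in G <-> galperm beta s)
        & forall (sigma : {rmorphism algC -> algC}) (i : 'I_d),
            sigma (beta i) \is Num.real].
Proof.
move=> d G d0 tG.
have p2 : prime 2 by [].
have [r [A [[r0 _ _ _] Hsz Hnr [alpha [Hidx [c cW [_ Hiff]]]]]]] :=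
  Hconj 2 d (Gp_grp G) p2 d0 (Gp_W G) (Gp_trans d0 tG) (iota_Gp G).
case: Hidx => ainj aroot aall abar _.
pose a x := alpha (c x).
have Hinj : injective a by move=> x y /ainj /perm_inj.
have Hroot : forall x, root (map_poly (@ratr algC) (av_frobmin A)) (a x).
  by move=> x; apply: aroot.
have Hall : forall z, root (map_poly (@ratr algC) (av_frobmin A)) z ->
    exists x, z = a x.
  move=> z /aall [x ->]; exists (c^-1 x)%g; by rewrite /a permKV.
have abar' : forall (k : 'I_d) (b : bool), alpha (k, ~~ b) = (alpha (k, b))^*.
  move=> k [] /=; last exact: abar.
  by rewrite abar conjCK.
have Hbar : forall x : Idx d, a (x.1, ~~ x.2) = (a x)^*.
  move=> x; rewrite /a.
  move: cW; rewrite inE => /forallP /(_ x) /eqP ->.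
  by rewrite abar'; case: (c x).
have Hq : forall x, a x * (a x)^* = (2 ^ r)%N%:R.
  by move=> x; apply: (av_frob_weil p2 r0 (Hroot x)).
have Hmon := av_frobmin_monic A.
have Hga : forall s, s \in Gp G <-> galperm a s.
  move=> s; rewrite Hiff; split.
    move=> [sigma H]; exists sigma => x; rewrite /a H; congr alpha.
    by rewrite conjgE !permM permK.
  move=> [sigma H]; exists sigma => x; have := H (c^-1 x)%g.
  rewrite /a permKV => ->; congr alpha.
  by rewrite conjgE !permM.
have Hsig : forall sigma : {rmorphism algC -> algC}, exists2 g, g \in G &
    forall k, sigma (beta a k) = beta a (g k).
  move=> sigma.
  have [t Ht] := sigma_perm Hinj Hroot Hall sigma.
  have : t \in Gp G by apply/Hga; exists sigma.
  case/imset2P => g b Hg _ Et; exists g => // k.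
  rewrite /beta rmorphD !Ht Et !liftbE /=.
  by case: b {Et}; rewrite //= addrC.
have [P HP] := exP Hinj Hroot Hbar Hq Hmon Hsz.
exists P, (beta a); split.
- exact: (beta_inj Hinj Hbar Hq).
- exact: HP.
- move=> s; split.
    move=> sG.
    have : liftb s false \in Gp G by apply/imset2P; exists s false.
    move/Hga => [sigma H]; exists sigma => k.
    by rewrite /beta rmorphD !H !liftbE.
  move=> [sigma H].
  have [g Hg Hgk] := Hsig sigma.
  suff -> : s = g by [].
  apply/permP => k; apply: (beta_inj Hinj Hbar Hq).
  by rewrite -H Hgk.
- move=> sigma k.
  have [g _ ->] := Hsig sigma.
  exact: (beta_real Hbar).
Qed.
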